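(* For every $n\in\mathbb{N}$, $\mathcal{D}_{p/q}(\mu_n)=\mu_{n+1}$.
   Context: Let $p>q>1$ be coprime integers, $A_p=\{0,\dots,p-1\}$, $A_q=\{0,\dots,q-1\}$ and $B=\{p-(2q-1),\dots,p-1\}$. For $n\in\mathbb{N}$ and $a\in\mathbb{Z}$, let $\tau(n,a)=\frac{np+a}{q}$, defined only when $q$ divides $np+a$. Let $\mathcal{T}_{p/q}$ be the deterministic automaton with state set $\mathbb{N}$, alphabet $A_p$, initial state $0$, and transitions $n\xrightarrow{a}\tau(n,a)$ for $a\in A_p$ with $\tau(n,a)$ defined. Every state $n$ has exactly one outgoing transition labelled by a letter of $A_q$; the minimal word $\mu_n\in A_q^{\omega}$ is the unique infinite word over $A_q$ labelling a path of $\mathcal{T}_{p/q}$ starting at state $n$. For $a\in B$ let $\omega(a)=\{(b,c)\in A_q\times A_q : c-b=a-(p-q)\}$. The transducer $\mathcal{D}_{p/q}$ has state set $\mathbb{N}$, input and output alphabet $A_q$, initial state $0$, and a transition $n\xrightarrow{b|c}\tau(n,a)$ (input $b$, output $c$) for every $n\in\mathbb{N}$, $a\in B$ with $\tau(n,a)$ defined, and $(b,c)\in\omega(a)$; no other transitions. The image $\mathcal{D}_{p/q}(w)$ of an infinite word $w$ is the infinite word $w'$ such that for every finite prefix $u$ of $w$, the output produced along the path from state $0$ reading input $u$ is a prefix of $w'$. *)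

(* Defs.v *)
From Stdlib Require Import ZArith.
Open Scope Z_scope.

(* Infinite words (letters are integers; membership in the alphabet is stated separately). *)
Definition word := nat -> Z.

Definition inA (k a : Z) : Prop := 0 <= a < k.

Definition inB (p q a : Z) : Prop := p - (2 * q - 1) <= a <= p - 1.

(* n --a--> m, i.e. tau(n,a) is defined (q divides np+a and the result is a
   state in N) and equals m : q*m = n*p + a. *)
Definition tau_rel (p q : Z) (n : nat) (a : Z) (m : nat) : Prop :=
  q * Z.of_nat m = Z.of_nat n * p + a.

Definition inOmega (p q a b c : Z) : Prop :=
  inA q b /\ inA q c /\ c - b = a - (p - q).

(* w ∈ A_q^omega labels an (infinite) path of T_{p/q} starting at state n;
   by the context there is exactly one such word, namely mu_n. *)
Definition is_min_word (p q : Z) (n : nat) (w : word) : Prop :=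
  exists s : nat -> nat, s 0%nat = n /\
    forall i : nat, inA q (w i) /\ tau_rel p q (s i) (w i) (s (S i)).

Definition D_run (p q : Z) (k : nat) (w : word) (c : word) (s : nat -> nat) : Prop :=
  s 0%nat = 0%nat /\
  forall i : nat, (i < k)%nat ->
    exists a : Z, inB p q a /\ tau_rel p q (s i) a (s (S i)) /\ inOmega p q a (w i) (c i).

(* D_{p/q}(w) = w' : every finite prefix of w can be read from state 0, and the
   output produced along any such path is a prefix of w'. *)
Definition D_image (p q : Z) (w w' : word) : Prop :=
  (forall k : nat, exists (c : word) (s : nat -> nat), D_run p q k w c s) /\
  (forall (k : nat) (c : word) (s : nat -> nat), D_run p q k w c s ->
     forall i : nat, (i < k)%nat -> c i = w' i).

(* Main.v *)
Require Import Defs.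
From Stdlib Require Import ZArith Lia.
Open Scope Z_scope.

Lemma qzero (q X Y : Z) : 1 < q -> q * X = Y -> - q < Y < q -> Y = 0.
Proof.
  intros Hq H HY. destruct (Z_lt_le_dec 0 X) as [h|h].
  - nia.
  - destruct (Z_lt_le_dec X 0) as [h'|h']; nia.
Qed.

Theorem mainTheorem3 (p q : Z) (Hq : 1 < q) (Hpq : q < p) (Hcop : Z.gcd p q = 1)
  (n : nat) (mu_n mu_n1 : word) :
  is_min_word p q n mu_n -> is_min_word p q (S n) mu_n1 ->
  D_image p q mu_n mu_n1.
Proof.
  intros [s [Hs0 Hs]] [t [Ht0 Ht]].
  unfold tau_rel, inA in *.
  assert (Hgap : forall i, (s i < t i)%nat).
  { induction i. - rewrite Hs0, Ht0; lia.
    - destruct (Hs i) as [H1 H2]; destruct (Ht i) as [H3 H4].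
      apply Nat2Z.inj_lt.
      assert (q * (Z.of_nat (t (S i)) - Z.of_nat (s (S i))) > 0) by nia.
      nia. }
  split.
  - intro k. exists mu_n1, (fun i => (t i - s i - 1)%nat). split.
    + simpl. rewrite Hs0, Ht0. lia.
    + intros i _. exists (mu_n1 i - mu_n i + p - q).
      destruct (Hs i) as [H1 H2]; destruct (Ht i) as [H3 H4].
      specialize (Hgap i) as G1. specialize (Hgap (S i)) as G2.
      unfold inB, tau_rel, inOmega, inA. repeat split; try lia.
      rewrite !Nat2Z.inj_sub by lia. nia.
  - intros k c r [Hr0 Hr].
    assert (Hinv : forall i, (i <= k)%nat ->
      Z.of_nat (r i) = Z.of_nat (t i) - Z.of_nat (s i) - 1
      /\ (forall j, (j < i)%nat -> c j = mu_n1 j)).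
    { induction i; intros Hik.
      - rewrite Hr0, Hs0, Ht0. split; [lia | intros; lia].
      - destruct IHi as [IH1 IH2]; [lia|].
        destruct (Hr i ltac:(lia)) as [a [Ha1 [Ha2 [Hb [Hc Hbc]]]]].
        unfold tau_rel, inA in *.
        destruct (Hs i) as [H1 H2]; destruct (Ht i) as [H3 H4].
        assert (E : c i - mu_n1 i = 0).
        { apply (qzero q (Z.of_nat (r (S i)) - (Z.of_nat (t (S i)) - Z.of_nat (s (S i)) - 1))); [lia | nia | lia]. }
        split.
        + nia.
        + intros j Hj. destruct (Nat.eq_dec j i); [subst; lia | apply IH2; lia]. }
    intros i Hi. apply (proj2 (Hinv (S i) Hi)). lia.
Qed.
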